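(* Consider the data-selling model described in the context, with $n$ buyers, and assume $z_0<\frac{1}{2\sqrt{\gamma}}\cdot\frac{n+1}{2n+1}$. Let $G$ be a core-periphery network on $N$ with periphery $P$, $|P|=m$, and core $K=N\setminus P$, $|K|=n-m$. Evaluate the payoffs on $G$ at the optimal contract whose target set is $P$. Then $G$ is Pareto-efficient among networks on $N$ with $n$ nodes: there is no network $G'$ on $N$ and optimal contract $C'$ for $G'$ such that - the seller's optimal profit under $G'$ is at least that under $G$, and - every buyer's expected payoff under $(G',C')$ is at least his payoff under $G$, with strict inequality for at least one buyer.
   Context: Model. There is a finite set of buyers $N=\{1,\dots,n\}$ and an undirected network $G$ on $N$; $N_i$ is the set of neighbors of $i$. A state $\theta\sim N(0,1/z_0)$ with $z_0>0$ is unknown to all. A contract $C$ consists of a target set $M(C)\subseteq N$, a common precision $z>0$, and prices $p_i\ge0$ for $i\in M(C)$. Each $i\in M(C)$ receives a signal $s_i=\theta+\varepsilon_i$, with $\varepsilon_i\sim N(0,1/z)$ independent. Each buyer observes the signals of his neighbors in $M(C)$ (and his own if he is in $M(C)$) and chooses $a_i$ to maximize $E[-(a_i-\theta)^2]$. With $m_i=|N_i\cap M(C)|$, buyer $i\in M(C)$ gets expected payoff $-\frac{1}{z_0+(m_i+1)z}-p_i$, and buyer $i\notin M(C)$ gets $-\frac{1}{z_0+m_iz}$. Buyer $i\in M(C)$ accepts iff $p_i\le \frac{1}{z_0+m_iz}-\frac{1}{z_0+(m_i+1)z}$. A contract is feasible if all $i\in M(C)$ accept. The seller's profit is $\sum_{i\in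 M(C)}p_i-\gamma z$ with $\gamma>0$. An optimal contract is a feasible contract maximizing the seller's profit. A core-periphery network with core $K$ and periphery $P$ (a partition of $N$) is one in which each core node is linked to every other node, and no two periphery nodes are linked. *)

(* Defs.v *)
From HB Require Import structures.
From mathcomp Require Import all_boot all_order all_algebra.
From mathcomp Require Import reals.
Set Implicit Arguments. Unset Strict Implicit. Unset Printing Implicit Defensive.
Import Order.TTheory GRing.Theory Num.Theory.
Local Open Scope ring_scope.

(* Buyers are N = 'I_n.  A network is an undirected simple graph:
   a symmetric irreflexive relation on 'I_n. *)
Definition is_network (n : nat) (G : rel 'I_n) : Prop :=
  irreflexive G /\ symmetric G.

Definition core_periphery (n : nat) (G : rel 'I_n) (P : {set 'I_n}) : Prop :=
  (forall k j : 'I_n, k \in ~: P -> j != k -> G k j) /\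
  (forall i j : 'I_n, i \in P -> j \in P -> ~~ G i j).

(* A contract: target set M, common precision z, prices p
   (only the values p i for i in M are meaningful). *)
Record contract (R : realType) (n : nat) := Contract {
  target : {set 'I_n};
  prec : R;
  price : 'I_n -> R }.

Section Model.
Variables (R : realType) (n : nat) (z0 gamma : R).

Definition nbrs_in (G : rel 'I_n) (C : contract R n) (i : 'I_n) : nat :=
  #|[set j in target C | G i j]|.

Definition accepts (G : rel 'I_n) (C : contract R n) (i : 'I_n) : Prop :=
  let m := (nbrs_in G C i)%:R in
  price C i <= 1 / (z0 + m * prec C) - 1 / (z0 + (m + 1) * prec C).

Definition feasible (G : rel 'I_n) (C : contract R n) : Prop :=
  0 < prec C /\
  (forall i, i \in target C -> 0 <= price C i /\ accepts G C i).

Definition profit (C : contract R n) : R :=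
  \sum_(i in target C) price C i - gamma * prec C.

Definition optimal (G : rel 'I_n) (C : contract R n) : Prop :=
  feasible G C /\ (forall C' : contract R n, feasible G C' -> profit C' <= profit C).

Definition payoff (G : rel 'I_n) (C : contract R n) (i : 'I_n) : R :=
  let m := (nbrs_in G C i)%:R in
  if i \in target C then - (1 / (z0 + (m + 1) * prec C)) - price C i
  else - (1 / (z0 + m * prec C)).

Definition pareto_dominates (G' : rel 'I_n) (C' : contract R n)
    (G : rel 'I_n) (C : contract R n) : Prop :=
  profit C <= profit C' /\
  (forall i, payoff G C i <= payoff G' C' i) /\
  (exists i, payoff G C i < payoff G' C' i).

End Model.

(* Main.v *)
Require Import Defs.
From HB Require Import structures.
From mathcomp Require Import all_boot all_order all_algebra.
From mathcomp Require Import reals.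
From mathcomp Require Import ring lra.
Import Order.TTheory GRing.Theory Num.Theory.
Local Open Scope ring_scope.

Lemma div_le (R : realFieldType) (p q X Y : R) :
  0 < X -> 0 < Y -> p * Y <= q * X -> p / X <= q / Y.
Proof.
move=> hX hY h; rewrite ler_pdivrMr // mulrAC ler_pdivlMr //.
Qed.

Lemma div_lt (R : realFieldType) (p q X Y : R) :
  0 < X -> 0 < Y -> p * Y < q * X -> p / X < q / Y.
Proof.
move=> hX hY h; rewrite ltr_pdivrMr // mulrAC ltr_pdivlMr //.
Qed.

Definition bnd {R : realFieldType} (a d z : R) := 1 / (a + d * z) - 1 / (a + (d + 1) * z).
Definition hh {R : realFieldType} (a z : R) := 1 / a - 1 / (a + z).

Lemma bndE (R : realFieldType) (a d z : R) : 0 < a -> 0 <= d -> 0 < z ->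
  bnd a d z = z / ((a + d * z) * (a + (d + 1) * z)).
Proof.
move=> ha hd hz; rewrite /bnd; field.
apply/andP; split; rewrite gt_eqF //; nra.
Qed.

Lemma bnd_gt0 (R : realFieldType) (a d z : R) : 0 < a -> 0 <= d -> 0 < z ->
  0 < bnd a d z.
Proof.
move=> ha hd hz; rewrite bndE //; apply: divr_gt0 => //; apply: mulr_gt0; nra.
Qed.

Lemma hhE (R : realFieldType) (a z : R) : 0 < a -> 0 < z -> hh a z = z / (a * (a + z)).
Proof. move=> ha hz; rewrite /hh; field; apply/andP; split; rewrite gt_eqF //; nra. Qed.

Lemma hh_gt0 (R : realFieldType) (a z : R) : 0 < a -> 0 < z -> 0 < hh a z.
Proof. move=> ha hz; rewrite hhE //; apply: divr_gt0 => //; nra. Qed.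

Lemma bnd0 (R : realFieldType) (a z : R) : 0 < a -> bnd a 0 z = hh a z.
Proof. by move=> ha; rewrite /bnd /hh mul0r addr0 add0r !mul1r. Qed.

Lemma L1s (R : realFieldType) (a d z : R) : 0 < a -> 1 <= d -> a < 2 * z ->
  bnd a d z < hh a z * (1 / (d + 1)).
Proof.
move=> ha hd hz.
have z0 : 0 < z by lra.
rewrite bndE // ?hhE //; last lra.
have -> : z / (a * (a + z)) * (1 / (d + 1)) = z / (a * (a + z) * (d + 1)).
  field; apply/and3P; split; rewrite gt_eqF //; nra.
have hX : 0 < (a + d * z) * (a + (d + 1) * z) by apply: mulr_gt0; nra.
have hY : 0 < a * (a + z) * (d + 1) by apply: mulr_gt0; [apply: mulr_gt0|]; nra.
apply: div_lt => //.
have h2 : 0 < (d + 1) * z ^+ 2 + a * z - a ^+ 2 by nra.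
have h3 : 0 < z * d * ((d + 1) * z ^+ 2 + a * z - a ^+ 2).
  by apply: mulr_gt0 => //; apply: mulr_gt0 => //; lra.
have -> : z * ((a + d * z) * (a + (d + 1) * z)) =
   z * (a * (a + z) * (d + 1)) + z * d * ((d + 1) * z ^+ 2 + a * z - a ^+ 2) by ring.
lra.
Qed.

Lemma L1 (R : realFieldType) (a z : R) (d : nat) : 0 < a -> a < 2 * z ->
  bnd a d%:R z <= hh a z * (1 / (d%:R + 1)).
Proof.
move=> ha hz; case: d => [|d].
  by rewrite bnd0 // add0r divr1 mulr1.
apply/ltW/L1s => //; rewrite ler1n //.
Qed.

Lemma L2 (R : realFieldType) (a z : R) (d : nat) : 0 < a -> 0 < z -> 2 * z <= a ->
  bnd a d%:R z <= 2 / (5 * a) * (1 / (d%:R + 1)).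
Proof.
move=> ha hz hza.
have hd : 0 <= d%:R :> R by [].
rewrite bndE //.
have -> : 2 / (5 * a) * (1 / (d%:R + 1)) = 2 / (5 * a * (d%:R + 1)) :> R.
  field; apply/andP; split; rewrite gt_eqF //; nra.
have hX : 0 < (a + d%:R * z) * (a + (d%:R + 1) * z) by apply: mulr_gt0; nra.
have hY : 0 < 5 * a * (d%:R + 1) by apply: mulr_gt0; [apply: mulr_gt0|]; nra.
apply: div_le => //.
case: d hd hX hY => [|d] hd hX hY.
  rewrite !mul0r addr0 add0r !mul1r; nra.
have hd1 : 1 <= d.+1%:R :> R by rewrite ler1n.
move: hd1 hd hX hY; set e := d.+1%:R => hd1 hd hX hY.
have s1 : 0 <= (4 * a - (e + 3) * z) ^+ 2 by apply: sqr_ge0.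
have s2 : 0 <= (15 * e ^+ 2 + 10 * e - 9) * z ^+ 2.
  apply: mulr_ge0; last by apply: sqr_ge0. nra.
have : 8 * (2 * ((a + e * z) * (a + (e + 1) * z)) - z * (5 * a * (e + 1))) =
  (4 * a - (e + 3) * z) ^+ 2 + (15 * e ^+ 2 + 10 * e - 9) * z ^+ 2 by ring.
lra.
Qed.


Definition deg {n} (G : rel 'I_n) (M : {set 'I_n}) (i : 'I_n) : nat :=
  #|[set j in M | G i j]|.

Lemma inv_mono (R : realFieldType) (a b : nat) : (a <= b)%N ->
  1 / (b%:R + 1) <= 1 / (a%:R + 1) :> R.
Proof.
move=> hab; apply: div_le; rewrite ?mul1r; try (apply: ltr_wpDl => //).
by rewrite lerD2r ler_nat.
Qed.

Lemma caro_wei (R : realFieldType) n (G : rel 'I_n) : irreflexive G -> symmetric G ->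
  forall M : {set 'I_n}, exists I : {set 'I_n},
   [/\ I \subset M, (forall i j, i \in I -> j \in I -> ~~ G i j) &
    \sum_(i in M) 1 / ((deg G M i)%:R + 1) <= (#|I|%:R : R)].
Proof.
move=> hirr hsym M.
move: {2}#|M| (leqnn #|M|) => k; elim: k M => [|k IH] M hM.
  exists set0; split => [|i j|]; rewrite ?sub0set ?inE //.
  move: hM; rewrite leqn0 cards_eq0 => /eqP ->; by rewrite big_set0 cards0.
case: (set_0Vmem M) => [->|[v0 hv0]].
  exists set0; split => [|i j|]; rewrite ?sub0set ?inE //; by rewrite big_set0 cards0.
case: (arg_minnP (deg G M) hv0) => v hvM hvmin.
set N := [set j in M | G v j].
set M2 := M :\: (v |: N).
have hvN : v \notin N by rewrite inE hirr andbF.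
have hM2 : (#|M2| <= k)%N.
  have : (#|M2| < #|M|)%N by apply: proper_card; apply/properP; split;
     [apply: subsetDl | exists v => //; rewrite !inE eqxx].
  move=> h; rewrite -ltnS; exact: leq_trans h hM.
have [I2 [hI2M hI2 hsum]] := IH M2 hM2.
exists (v |: I2).
have hvI2 : v \notin I2.
  apply/negP => /(subsetP hI2M); rewrite !inE eqxx //.
split.
- apply/subsetP => j; rewrite !inE => /orP [/eqP ->//|/(subsetP hI2M)].
  by rewrite !inE => /andP [_ ->].
- have nv : forall j, j \in I2 -> ~~ G v j.
    move=> j /(subsetP hI2M); rewrite !inE negb_or => /andP [/andP [_ hj] hjM].
    by move: hj; rewrite hjM.
  move=> i j; rewrite !inE => /orP [/eqP ->|hi] /orP [/eqP ->|hj].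
  + by rewrite hirr.
  + exact: nv.
  + by rewrite hsym; apply: nv.
  + exact: hI2.
- rewrite cardsU1 hvI2 /= natrD (big_setID (v |: N)) /=.
  have -> : M :&: (v |: N) = v |: N.
    apply/setIidPr/subsetP => j; rewrite !inE => /orP [/eqP ->//|/andP [] //].
  rewrite lerD //.
  + apply: le_trans (_ : \sum_(j in v |: N) 1 / ((deg G M v)%:R + 1) <= _).
      apply: ler_sum => j hj; apply: inv_mono; apply: hvmin.
      by move: hj; rewrite !inE => /orP [/eqP ->|/andP [] ].
    rewrite sumr_const cardsU1 hvN /=.
    have -> : #|N| = deg G M v by [].
    rewrite (_ : (1 + deg G M v)%N = (deg G M v).+1) // -(mulr_natr _ (deg G M v).+1) -(@natr1 R (deg G M v)) div1r mulVf //.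
    by rewrite gt_eqF // ltr_wpDl.
  + apply: le_trans hsum; apply: ler_sum => j hj; apply: inv_mono.
    apply: subset_leq_card; apply/subsetP => x; rewrite !inE => /andP [hx ->].
    by move: hx => /andP [_ ->].
Qed.


Lemma opt_price (R : realType) n (z0 gamma : R) (G : rel 'I_n) (C : contract R n) :
  0 < z0 -> optimal z0 gamma G C ->
  forall i, i \in target C -> price C i = bnd z0 (nbrs_in G C i)%:R (prec C).
Proof.
move=> hz0 [[hz hf] hopt].
pose C2 := Contract (target C) (prec C) (fun i => bnd z0 (nbrs_in G C i)%:R (prec C)).
have hf2 : feasible z0 G C2.
  split => // i hi; split; last by rewrite /accepts.
  by apply/ltW/bnd_gt0.
have := hopt C2 hf2; rewrite /profit /= lerD2r => hle.
have hge : forall i, i \in target C -> 0 <= bnd z0 (nbrs_in G C i)%:R (prec C) - price C i.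
  by move=> i hi; rewrite subr_ge0; case: (hf i hi).
have h0 : \sum_(i in target C) (bnd z0 (nbrs_in G C i)%:R (prec C) - price C i) = 0.
  apply/le_anti/andP; split; last by apply: sumr_ge0.
  by rewrite sumrB subr_le0.
move=> i hi; apply/eqP; rewrite eq_sym -subr_eq0; apply/eqP.
exact: (psumr_eq0P hge h0 hi).
Qed.

Lemma indep_contract (R : realType) n (z0 gamma : R) (G : rel 'I_n) (T : {set 'I_n}) (y : R) :
  0 < z0 -> 0 < y -> (forall i, i \in T -> #|[set j in T | G i j]| = 0%N) ->
  feasible z0 G (Contract T y (fun _ => hh z0 y)) /\
  profit gamma (Contract T y (fun _ => hh z0 y)) = #|T|%:R * hh z0 y - gamma * y.
Proof.
move=> ha hy hT; split.
  split => // i hi; split; first by apply/ltW/hh_gt0.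
  rewrite /accepts /nbrs_in /= hT //.
  have -> : ((0%N)%:R : R) = 0 by [].
  by rewrite -/(bnd z0 0 y) bnd0.
by rewrite /profit /= sumr_const mulr_natl.
Qed.

Lemma opt_nonempty (R : realType) n (z0 gamma : R) (G : rel 'I_n) (C : contract R n) :
  0 < gamma -> optimal z0 gamma G C -> exists i, i \in target C.
Proof.
move=> hg [[hz hf] hopt].
case: (set_0Vmem (target C)) => [h0|[i hi]]; last by exists i.
pose C2 := Contract (target C) (prec C / 2) (price C).
have hf2 : feasible z0 G C2.
  split => [|i]; first by rewrite /C2 /=; lra.
  by rewrite /C2 /= h0 inE.
have := hopt C2 hf2; rewrite /profit /= h0 big_set0.
nra.
Qed.
Arguments opt_price {R n z0 gamma G C}.
Arguments indep_contract {R n z0} gamma G {T y}.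
Arguments opt_nonempty {R n z0 gamma G C}.


Lemma opt_indep (R : realType) n (z0 gamma : R) (G : rel 'I_n) (C : contract R n) :
  0 < z0 -> 0 < gamma -> gamma * z0 ^+ 2 < 1 / 9 -> is_network G ->
  optimal z0 gamma G C -> forall i, i \in target C -> nbrs_in G C i = 0%N.
Proof.
move=> ha hg h9 [hirr hsym] hC i0 hi0.
apply/eqP; rewrite -leqn0 leqNgt; apply/negP => hpos.
have hpr := opt_price ha hC.
have [[hz _] hopt] := hC.
set z := prec C in hz hpr hopt *.
set M := target C in hi0 hpr hopt *.
have [I [hIM hIind hsum]] := @caro_wei R _ _ hirr hsym M.
have hIdeg : forall i, i \in I -> #|[set j in I | G i j]| = 0%N.
  move=> i hi; apply/eqP; rewrite cards_eq0; apply/eqP/setP => j; rewrite !inE.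
  case hj: (j \in I) => //=; apply/negbTE/hIind => //.
have hprof : profit gamma C = \sum_(i in M) bnd z0 (deg G M i)%:R z - gamma * z.
  by rewrite /profit (eq_bigr _ hpr).
set W := \sum_(i in M) 1 / ((deg G M i)%:R + 1) in hsum.
have hw : forall i, 0 < 1 / ((deg G M i)%:R + 1) :> R.
  by move=> i; rewrite div1r invr_gt0 ltr_wpDl.
have hW : W = 1 / ((deg G M i0)%:R + 1) + \sum_(i in M | i != i0) 1 / ((deg G M i)%:R + 1).
  by rewrite /W (bigD1 i0).
have hWpos : 0 < W.
  rewrite hW; apply: ltr_wpDr; last exact: hw.
  by apply: sumr_ge0 => i _; apply/ltW.
have hI1 : 1 <= (#|I|%:R : R).
  have : 0 < (#|I|%:R : R) by apply: lt_le_trans hsum.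
  by rewrite ltr0n ler1n.
case: (ltrP z0 (2 * z)) => hza.
-
  have [hfI hpI] := indep_contract gamma G ha hz hIdeg.
  have := hopt _ hfI; rewrite hpI hprof lerD2r.
  apply/negP; rewrite -ltNge.
  have hh0 := hh_gt0 _ _ _ ha hz.
  apply: lt_le_trans (_ : hh z0 z * W <= _); last first.
    by rewrite mulrC; apply: ler_wpM2r => //; apply/ltW.
  rewrite hW mulrDr mulr_sumr (bigD1 i0) //=.
  apply: ltr_leD.
    apply: L1s => //; first by rewrite ler1n.
  apply: ler_sum => i _; exact: L1.
-
  have h2a : 0 < 2 * z0 by lra.
  have [hfI hpI] := indep_contract gamma G ha h2a hIdeg.
  have := hopt _ hfI; rewrite hpI hprof.
  apply/negP; rewrite -ltNge.
  have hS : \sum_(i in M) bnd z0 (deg G M i)%:R z <= 2 / (5 * z0) * W.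
    rewrite /W mulr_sumr; apply: ler_sum => i _; exact: L2.
  have hS2 : 2 / (5 * z0) * W <= 2 / (5 * z0) * #|I|%:R.
    apply: ler_wpM2l => //; apply: divr_ge0 => //; lra.
  have hhh : hh z0 (2 * z0) = 2 / (3 * z0).
    rewrite /hh; field; apply/andP; split; rewrite gt_eqF //; lra.
  rewrite hhh.
  have key : 2 * gamma * z0 < 4 / (15 * z0).
    rewrite ltr_pdivlMr; last lra. nra.
  have e : #|I|%:R * (2 / (3 * z0)) = 2 / (5 * z0) * #|I|%:R + 4 / (15 * z0) * #|I|%:R.
    field; rewrite gt_eqF //.
  have k2 : 4 / (15 * z0) <= 4 / (15 * z0) * #|I|%:R.
    rewrite -[X in X <= _]mulr1; apply: ler_wpM2l => //; apply: divr_ge0; lra.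
  have hgz : 0 < gamma * z by apply: mulr_gt0.
  rewrite e. lra.
Qed.
Arguments opt_indep {R n z0 gamma G C}.


Lemma payoff_opt (R : realType) n (z0 gamma : R) (G : rel 'I_n) (C : contract R n) :
  0 < z0 -> optimal z0 gamma G C ->
  forall i, payoff z0 G C i = - (1 / (z0 + (nbrs_in G C i)%:R * prec C)).
Proof.
move=> ha hC i; rewrite /payoff; case: ifP => hi //.
rewrite (opt_price ha hC i hi) /bnd; lra.
Qed.
Arguments payoff_opt {R n z0 gamma G C}.

Lemma inv_lt (R : realFieldType) (a x : R) : 0 < a -> 0 < x -> 1 / (a + x) < 1 / a.
Proof. move=> ha hx; apply: div_lt; lra. Qed.

Lemma inv_lt_rev (R : realFieldType) (a x y : R) : 0 < a + x -> 0 < a + y ->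
  1 / (a + y) < 1 / (a + x) -> x < y.
Proof.
move=> hx hy h; rewrite ltNge; apply/negP => hyx.
have : 1 / (a + x) <= 1 / (a + y) by apply: div_le => //; lra.
lra.
Qed.

Lemma conc (R : realFieldType) (a x x' : R) : 0 < a -> 0 < x -> x < x' ->
  1 / (a + (x + x') / 2) < (1 / (a + x) + 1 / (a + x')) / 2.
Proof.
move=> ha hx hxx.
have hu : 0 < a + x by lra.
have hv : 0 < a + x' by lra.
have -> : 1 / (a + (x + x') / 2) = 2 / ((a + x) + (a + x')).
  by field; rewrite gt_eqF //; lra.
have -> : (1 / (a + x) + 1 / (a + x')) / 2 = ((a + x) + (a + x')) / (2 * ((a + x) * (a + x'))).
  field; apply/andP; split; rewrite gt_eqF //; lra.
move: hu hv; set u := a + x; set v := a + x' => hu hv.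
have huv : u < v by rewrite /u /v; lra.
apply: div_lt; first lra.
  apply: mulr_gt0 => //; apply: mulr_gt0 => //.
nra.
Qed.
Arguments inv_lt {R a x}.
Arguments inv_lt_rev {R a x y}.
Arguments conc {R a x x'}.


Theorem proposition5 (R : realType) (n : nat) (z0 gamma : R)
  (hz0 : 0 < z0) (hgamma : 0 < gamma)
  (hsmall : z0 < 1 / (2 * Num.sqrt gamma) * ((n%:R + 1) / (2 * n%:R + 1)))
  (G : rel 'I_n) (P : {set 'I_n})
  (hG : is_network G) (hcp : core_periphery G P)
  (C : contract R n) (hC : optimal z0 gamma G C) (hCP : target C = P) :
  ~ (exists (G' : rel 'I_n) (C' : contract R n),
       is_network G' /\ optimal z0 gamma G' C' /\
       pareto_dominates z0 gamma G' C' G C).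
Proof.
move=> [G' [C' [hG' [hC' [hprof [hpay [i hi]]]]]]].
have [j0 hj0] := opt_nonempty hgamma hC.
have hn : (0 < n)%N := leq_ltn_trans (leq0n j0) (ltn_ord j0).
have h9 : gamma * z0 ^+ 2 < 1 / 9.
  set s := Num.sqrt gamma in hsmall.
  have hs : 0 < s by rewrite sqrtr_gt0.
  have hss : s ^+ 2 = gamma by rewrite sqr_sqrtr // ltW.
  have hn1 : 1 <= (n%:R : R) by rewrite ler1n.
  have hq : (n%:R + 1) / (2 * n%:R + 1) <= 2 / 3 :> R.
    rewrite ler_pdivrMr; lra.
  have h1 : z0 < 1 / (2 * s) * (2 / 3).
    apply: lt_le_trans hsmall _; apply: ler_wpM2l => //.
    apply: divr_ge0 => //; lra.
  have e : 1 / (2 * s) * (2 / 3) = (1 / 3) / s.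
    by field; rewrite gt_eqF.
  rewrite e ltr_pdivlMr // in h1.
  rewrite -hss.
  have h0 : 0 <= z0 * s by apply: mulr_ge0; apply/ltW.
  nra.
have indC := opt_indep hz0 hgamma h9 hG hC.
have indC' := opt_indep hz0 hgamma h9 hG' hC'.
have prC := opt_price hz0 hC.
have prC' := opt_price hz0 hC'.
have [[hz _] hoptC] := hC.
have [[hz' _] _] := hC'.
set z := prec C in hz hprof hpay hi prC hoptC *.
set z' := prec C' in hz' hprof hpay hi prC' *.
set m := #|P|.
have hm : 1 <= (m%:R : R).
  rewrite ler1n /m card_gt0; apply/set0Pn; exists j0; by rewrite -hCP.
have payC i1 : payoff z0 G C i1 = - (1 / (z0 + (nbrs_in G C i1)%:R * z)).
  exact: payoff_opt hz0 hC i1.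
have payC' i1 : payoff z0 G' C' i1 = - (1 / (z0 + (nbrs_in G' C' i1)%:R * z')).
  exact: payoff_opt hz0 hC' i1.
have nbP i1 : i1 \in P -> nbrs_in G C i1 = 0%N.
  by move=> h; apply: indC; rewrite hCP.
have nbK k : k \notin P -> nbrs_in G C k = m.
  move=> hk; rewrite /nbrs_in hCP /m.
  suff -> : [set j in P | G k j] = P by [].
  apply/setP => j; rewrite inE.
  case hj: (j \in P) => //=.
  have hkP : k \in ~: P by rewrite inE.
  have hjk : j != k by apply/eqP => ejk; move: hk; rewrite -ejk hj.
  by rewrite (hcp.1 k j hkP hjk).
have hsub : target C' \subset P.
  apply/subsetP => k hk; apply: contraT => hkP.
  have := hpay k; rewrite payC payC' nbK // indC' // mul0r addr0.
  have hmz : 0 < m%:R * z by apply: mulr_gt0 => //; lra.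
  have := inv_lt hz0 hmz; lra.
set m' := #|target C'|.
have hm' : (m' <= m)%N by apply: subset_leq_card.
have profC : profit gamma C = m%:R * hh z0 z - gamma * z.
  rewrite /profit hCP (eq_bigr (fun _ => hh z0 z)); first by rewrite sumr_const mulr_natl.
  move=> j hj; rewrite prC ?hCP // nbP //; exact: (bnd0 _ z0 z hz0).
have profC' : profit gamma C' = m'%:R * hh z0 z' - gamma * z'.
  rewrite /profit (eq_bigr (fun _ => hh z0 z')); first by rewrite sumr_const mulr_natl.
  move=> j hj; rewrite prC' // indC' //; exact: (bnd0 _ z0 z' hz0).
have optC y : 0 < y -> m%:R * hh z0 y - gamma * y <= profit gamma C.
  move=> hy.
  have hT : forall j, j \in P -> #|[set k in P | G j k]| = 0%N.
    by move=> j hj; have := nbP j hj; rewrite /nbrs_in hCP.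
  have [hf hp] := indep_contract gamma G hz0 hy hT.
  by rewrite -hp; apply: hoptC.
have hhz' := hh_gt0 _ _ _ hz0 hz'.
case: (ltnP m' m) => hmm.
  have : (m'%:R : R) < m%:R by rewrite ltr_nat.
  move=> hlt.
  have := optC z' hz'.
  have : m'%:R * hh z0 z' < m%:R * hh z0 z' by rewrite ltr_pM2r.
  lra.
have hmeq : target C' = P.
  apply/eqP; rewrite eqEcard hsub /=; exact: hmm.
case hiP: (i \in P).
  move: hi; rewrite payC payC' nbP // indC' ?hmeq // !mul0r !addr0; lra.
have hiP' : i \notin P by rewrite hiP.
move: hi; rewrite payC payC' nbK //.
rewrite ltrN2 => hi.
have hd : ((nbrs_in G' C' i)%:R : R) <= m%:R.
  rewrite ler_nat; apply: (leq_trans _ hm'); apply: subset_leq_card.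
  by apply/subsetP => j; rewrite inE => /andP [].
have hzz : m%:R * z < m%:R * z'.
  have h1 : m%:R * z < (nbrs_in G' C' i)%:R * z'.
    apply: inv_lt_rev hi.
      have : 0 <= (m%:R : R) * z by apply: mulr_ge0 => //; lra.
      lra.
    have : 0 <= ((nbrs_in G' C' i)%:R : R) * z' by apply: mulr_ge0 => //; lra.
    lra.
  have h2 : (nbrs_in G' C' i)%:R * z' <= m%:R * z' by apply: ler_wpM2r; lra.
  lra.
have hzlt : z < z' by rewrite -(ltr_pM2l (_ : 0 < m%:R)) //; lra.
have hy : 0 < (z + z') / 2 by lra.
have := optC _ hy.
have hc := conc hz0 hz hzlt.
have hc2 : m%:R * (1 / (z0 + (z + z') / 2)) < m%:R * ((1 / (z0 + z) + 1 / (z0 + z')) / 2).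
  by rewrite ltr_pM2l //; lra.
move: hprof; rewrite profC profC' /m' hmeq -/m /hh.
lra.
Qed.
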